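(* Let $\mu\in\mathcal{P}(\mathbb{R}^p)$, $\nu\in\mathcal{P}(\mathbb{R}^q)$, $E\subset\mathbb{R}^p$, $F\subset\mathbb{R}^q$ linear subspaces, and for a loss $L$ define $$GW_{E,F}(\mu,\nu)=\inf_{\gamma\in\Pi_{E,F}(\mu,\nu)}\iint L(x,x',y,y')\,\mathrm{d}\gamma(x,y)\,\mathrm{d}\gamma(x',y').$$ (i) If $L(x,x',y,y')=(\|x-x'\|_2^2-\|y-y'\|_2^2)^2$, then for every map $f:\mathbb{R}^p\to\mathbb{R}^p$ of the form $f(x)=(x_E,f_{E^\perp}(x_{E^\perp}))$ with $f_{E^\perp}$ an isometry of $E^\perp$ (in particular a translation or an orthogonal linear map of $E^\perp$), $GW_{E,F}(f_\#\mu,\nu)=GW_{E,F}(\mu,\nu)$; symmetrically for maps acting as an isometry on $F^\perp$ and as the identity on $F$ applied to $\nu$. (ii) If $L(x,x',y,y')=(\langle x,x'\rangle_p-\langle y,y'\rangle_q)^2$, the same invariance holds for every $f(x)=(x_E,f_{E^\perp}(x_{E^\perp}))$ with $f_{E^\perp}$ an orthogonal linear map of $E^\perp$ (and symmetrically on $F^\perp$).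
   Context: $\pi^E$ denotes orthogonal projection onto $E$, points are written $x=(x_E,x_{E^\perp})$ and $y=(y_F,y_{F^\perp})$. $\gamma^*_{E,F}$ denotes a fixed optimal plan for the Gromov–Wasserstein problem with loss $L$ between $\pi^E_\#\mu$ and $\pi^F_\#\nu$ (i.e. minimizing $\iint L\,\mathrm{d}\gamma\,\mathrm{d}\gamma$ over couplings); note $\pi^E_\#f_\#\mu=\pi^E_\#\mu$ for the maps considered. $\Pi_{E,F}(\mu,\nu)=\{\gamma\in\Pi(\mu,\nu):(\pi^E,\pi^F)_\#\gamma=\gamma^*_{E,F}\}$, where $\Pi(\mu,\nu)$ is the set of couplings of $\mu$ and $\nu$. *)

(* Defs.v *)
From HB Require Import structures.
From mathcomp Require Import all_boot all_order all_algebra.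
From mathcomp Require Import all_classical all_reals all_analysis.
Set Implicit Arguments. Unset Strict Implicit. Unset Printing Implicit Defensive.
Import Order.TTheory GRing.Theory Num.Theory.
Import numFieldNormedType.Exports.
Local Open Scope classical_set_scope.
Local Open Scope ring_scope.

(* R^p is represented by row vectors 'rV[R]_p, equipped with the Borel
   sigma-algebra generated by the open sets of the usual topology. *)
Definition Rvec (R : realType) (p : nat) :=
  g_sigma_algebraType (@open 'rV[R]_p).

Definition dotp (R : realType) (p : nat) (x y : 'rV[R]_p) : R :=
  (x *m y^T) ord0 ord0.

(* A linear subspace E of R^p is the row space of a square matrix E.
   Its orthogonal complement E^perp = {u | u E^T = 0} = row space of kermx E^T. *)
Definition perp (R : realType) (p : nat) (E : 'M[R]_p) : 'M[R]_p := kermx E^T.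

Definition projE (R : realType) (p : nat) (E : 'M[R]_p) (x : 'rV[R]_p) : 'rV[R]_p :=
  x *m proj_mx E (perp E).

Definition projEperp (R : realType) (p : nat) (E : 'M[R]_p) (x : 'rV[R]_p) :=
  x - projE E x.

Definition isometry_on_perp (R : realType) (p : nat) (E : 'M[R]_p)
    (g : 'rV[R]_p -> 'rV[R]_p) : Prop :=
  (forall u, (u <= perp E)%MS -> (g u <= perp E)%MS) /\
  (forall u v, (u <= perp E)%MS -> (v <= perp E)%MS ->
     dotp (g u - g v) (g u - g v) = dotp (u - v) (u - v)).

Definition orthogonal_linear_on_perp (R : realType) (p : nat) (E : 'M[R]_p)
    (g : 'rV[R]_p -> 'rV[R]_p) : Prop :=
  (forall u, (u <= perp E)%MS -> (g u <= perp E)%MS) /\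
  (forall (a : R) u v, (u <= perp E)%MS -> (v <= perp E)%MS ->
     g (a *: u + v) = a *: g u + g v) /\
  (forall u v, (u <= perp E)%MS -> (v <= perp E)%MS ->
     dotp (g u) (g v) = dotp u v).

Definition fmap_perp (R : realType) (p : nat) (E : 'M[R]_p)
    (g : 'rV[R]_p -> 'rV[R]_p) (x : 'rV[R]_p) : 'rV[R]_p :=
  projE E x + g (projEperp E x).

Definition push (R : realType) (T U : Type) (m : set T -> \bar R) (f : T -> U) : set U -> \bar R :=
  fun A => m (f @^-1` A).

Section GW.
Variables (R : realType) (p q : nat).
Local Notation Xp := (Rvec R p).
Local Notation Yq := (Rvec R q).

Definition L_dist (x x' : 'rV[R]_p) (y y' : 'rV[R]_q) : R :=
  (dotp (x - x') (x - x') - dotp (y - y') (y - y')) ^+ 2.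
Definition L_inner (x x' : 'rV[R]_p) (y y' : 'rV[R]_q) : R :=
  (dotp x x' - dotp y y') ^+ 2.

Definition coupling (m1 : set Xp -> \bar R) (m2 : set Yq -> \bar R)
    (gam : probability (Xp * Yq)%type R) : Prop :=
  (forall A : set Xp, measurable A -> gam (A `*` setT) = m1 A) /\
  (forall B : set Yq, measurable B -> gam (setT `*` B) = m2 B).

Definition gw_cost (L : 'rV[R]_p -> 'rV[R]_p -> 'rV[R]_q -> 'rV[R]_q -> R)
    (gam : probability (Xp * Yq)%type R) : \bar R :=
  (\int[gam]_z \int[gam]_z' (L z.1 z'.1 z.2 z'.2)%:E)%E.

Definition gw_optimal (L : 'rV[R]_p -> 'rV[R]_p -> 'rV[R]_q -> 'rV[R]_q -> R)
    (E : 'M[R]_p) (F : 'M[R]_q) (mu : set Xp -> \bar R) (nu : set Yq -> \bar R)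
    (gs : probability (Xp * Yq)%type R) : Prop :=
  coupling (push mu (projE E : Xp -> Xp)) (push nu (projE F : Yq -> Yq)) gs /\
  (forall gam, coupling (push mu (projE E : Xp -> Xp)) (push nu (projE F : Yq -> Yq)) gam ->
     (gw_cost L gs <= gw_cost L gam)%E).

Definition Pi_EF (E : 'M[R]_p) (F : 'M[R]_q) (gs : probability (Xp * Yq)%type R)
    (mu : set Xp -> \bar R) (nu : set Yq -> \bar R) :
    set (probability (Xp * Yq)%type R) :=
  [set gam | coupling mu nu gam /\
     forall A : set (Xp * Yq)%type, measurable A ->
       gam ((fun z : (Xp * Yq)%type => ((projE E z.1 : Xp), (projE F z.2 : Yq))) @^-1` A)
       = gs A].

Definition GW_EF (L : 'rV[R]_p -> 'rV[R]_p -> 'rV[R]_q -> 'rV[R]_q -> R)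
    (E : 'M[R]_p) (F : 'M[R]_q) (gs : probability (Xp * Yq)%type R)
    (mu : set Xp -> \bar R) (nu : set Yq -> \bar R) : \bar R :=
  ereal_inf [set gw_cost L gam | gam in Pi_EF E F gs mu nu].

End GW.

(* Main.v *)
Require Import Defs.
From HB Require Import structures.
From mathcomp Require Import all_boot all_order all_algebra.
From mathcomp Require Import all_classical all_reals all_analysis.
From mathcomp Require Import measurable_realfun.
From mathcomp Require Import ring lra zify.
Import Order.TTheory GRing.Theory Num.Theory.
Import numFieldNormedType.Exports.
Local Open Scope classical_set_scope.
Local Open Scope ring_scope.


Lemma gw_push_le (R : realType) (p q : nat)
  (L : 'rV[R]_p -> 'rV[R]_p -> 'rV[R]_q -> 'rV[R]_q -> R) (E : 'M[R]_p) (F : 'M[R]_q)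
  (gs : probability (Rvec R p * Rvec R q)%type R)
  (m : set (Rvec R p) -> \bar R) (n : set (Rvec R q) -> \bar R)
  (phi : Rvec R p -> Rvec R p) (psi : Rvec R q -> Rvec R q) :
  measurable_fun setT phi -> measurable_fun setT psi ->
  (forall x, projE E (phi x) = projE E x) -> (forall y, projE F (psi y) = projE F y) ->
  (forall x x' y y', L (phi x) (phi x') (psi y) (psi y') = L x x' y y') ->
  (forall x x' y y', 0 <= L x x' y y') ->
  measurable_fun setT (fun zz : ((Rvec R p * Rvec R q) * (Rvec R p * Rvec R q))%type =>
      (L zz.1.1 zz.2.1 zz.1.2 zz.2.2)%:E) ->
  (GW_EF L E F gs (push m phi) (push n psi) <= GW_EF L E F gs m n)%E.
Proof.
move=> mphi mpsi hE hF hL L0 mL.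
apply: ereal_inf_le_tmp => _ [gam [[cg1 cg2] pg] <-].
have mPhi : measurable_fun setT (fun z : (Rvec R p * Rvec R q)%type => (phi z.1, psi z.2)).
  apply: measurable_fun_pair.
    exact: measurableT_comp mphi measurable_fst.
  exact: measurableT_comp mpsi measurable_snd.
pose Phi : {mfun _ >-> _} := HB.pack (fun z : (Rvec R p * Rvec R q)%type => (phi z.1, psi z.2))
   (isMeasurableFun.Build _ _ _ _ _ mPhi).
exists (distribution gam Phi).
  split; first split.
  - move=> A mA.
    rewrite /distribution /pushforward /push.
    transitivity (gam ((phi @^-1` A) `*` setT)); first congr (gam _).
    rewrite cg1 //.
    by rewrite -[X in measurable X]setTI; apply: mphi.
  - move=> B mB.
    rewrite /distribution /pushforward /push.
    transitivity (gam (setT `*` (psi @^-1` B))); first congr (gam _).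
    rewrite cg2 //.
    by rewrite -[X in measurable X]setTI; apply: mpsi.
  - move=> A mA.
    rewrite /distribution /pushforward -pg //.
    congr (gam _); apply/funext => z /=.
    by rewrite /preimage /= hE hF.
pose f := fun zz : ((Rvec R p * Rvec R q) * (Rvec R p * Rvec R q))%type =>
      (L zz.1.1 zz.2.1 zz.1.2 zz.2.2)%:E.
have f0 : forall zz, (0 <= f zz)%E by move=> zz; rewrite /f lee_fin.
rewrite /gw_cost.
have -> : (fun z : (Rvec R p * Rvec R q)%type =>
     \int[distribution gam Phi]_z' (L z.1 z'.1 z.2 z'.2)%:E)%E =
     fubini_F (distribution gam Phi) f by [].
rewrite ge0_integral_distribution; first last.
- move=> z; exact: integral_ge0.
- exact: measurable_fun_fubini_tonelli_F.
apply: eq_integral => z _ /=.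
rewrite /fubini_F ge0_integral_distribution //; first last.
  exact: measurable_fun_pair2.
apply: eq_integral => z' _ /=.
by rewrite /f /= hL.
Qed.


Lemma dotpE {R : realType} {p : nat} (x y : 'rV[R]_p) : dotp x y = \sum_i x ord0 i * y ord0 i.
Proof. by rewrite /dotp !mxE; apply: eq_bigr => i _; rewrite mxE. Qed.

Lemma dotpC {R : realType} {p : nat} (x y : 'rV[R]_p) : dotp x y = dotp y x.
Proof. by rewrite !dotpE; apply: eq_bigr => i _; rewrite mulrC. Qed.

Lemma dotpDl {R : realType} {p : nat} (x y z : 'rV[R]_p) : dotp (x + y) z = dotp x z + dotp y z.
Proof. by rewrite /dotp mulmxDl mxE. Qed.

Lemma dotpZl {R : realType} {p : nat} a (x z : 'rV[R]_p) : dotp (a *: x) z = a * dotp x z.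
Proof. by rewrite /dotp -scalemxAl mxE. Qed.

Lemma dotpNl {R : realType} {p : nat} (x z : 'rV[R]_p) : dotp (- x) z = - dotp x z.
Proof. by rewrite -scaleN1r dotpZl mulN1r. Qed.

Lemma dotpBl {R : realType} {p : nat} (x y z : 'rV[R]_p) : dotp (x - y) z = dotp x z - dotp y z.
Proof. by rewrite dotpDl dotpNl. Qed.

Lemma dotpDr {R : realType} {p : nat} (x y z : 'rV[R]_p) : dotp z (x + y) = dotp z x + dotp z y.
Proof. by rewrite dotpC dotpDl !(dotpC z). Qed.

Lemma dotpZr {R : realType} {p : nat} a (x z : 'rV[R]_p) : dotp z (a *: x) = a * dotp z x.
Proof. by rewrite dotpC dotpZl dotpC. Qed.

Lemma dotpNr {R : realType} {p : nat} (x z : 'rV[R]_p) : dotp z (- x) = - dotp z x.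
Proof. by rewrite dotpC dotpNl dotpC. Qed.

Lemma dotpBr {R : realType} {p : nat} (x y z : 'rV[R]_p) : dotp z (x - y) = dotp z x - dotp z y.
Proof. by rewrite dotpDr dotpNr. Qed.

Lemma dotp0l {R : realType} {p : nat} (z : 'rV[R]_p) : dotp 0 z = 0.
Proof. by rewrite /dotp mul0mx mxE. Qed.

Lemma dotp_ge0 {R : realType} {p : nat} (x : 'rV[R]_p) : 0 <= dotp x x.
Proof. by rewrite dotpE sumr_ge0 // => i _; rewrite -expr2 sqr_ge0. Qed.

Lemma dotp_eq0 {R : realType} {p : nat} (x : 'rV[R]_p) : dotp x x = 0 -> x = 0.
Proof.
rewrite dotpE => /eqP; rewrite psumr_eq0; last by move=> i _; rewrite -expr2 sqr_ge0.
move=> /allP H; apply/rowP => i; rewrite mxE; apply/eqP.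
by have := H i (mem_index_enum i); rewrite -expr2 sqrf_eq0.
Qed.

Lemma orthE {R : realType} {p : nat} (E : 'M[R]_p) (a b : 'rV[R]_p) :
  (a <= E)%MS -> (b <= perp E)%MS -> dotp a b = 0.
Proof.
move=> /submxP[c ->] /sub_kermxP hb.
rewrite /dotp -mulmxA -[E *m b^T]trmxK trmx_mul trmxK hb trmx0 mulmx0 mxE //.
Qed.

Lemma capE {R : realType} {p : nat} (E : 'M[R]_p) : (E :&: perp E = 0)%MS.
Proof.
apply/eqP; apply/rowV0P => v; rewrite sub_capmx => /andP[hE hP].
by apply: dotp_eq0; exact: (@orthE _ _ E v v hE hP).
Qed.

Lemma fullE {R : realType} {p : nat} (E : 'M[R]_p) (x : 'rV[R]_p) : (x <= E + perp E)%MS.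
Proof.
apply: submx_full; rewrite /row_full mxrank_disjoint_sum ?capE //.
by rewrite /perp mxrank_ker mxrank_tr subnKC // rank_leq_row.
Qed.

Lemma projE_sub {R : realType} {p : nat} (E : 'M[R]_p) x : (projE E x <= E)%MS.
Proof. exact: proj_mx_sub. Qed.

Lemma projEperp_sub {R : realType} {p : nat} (E : 'M[R]_p) x : (projEperp E x <= perp E)%MS.
Proof. exact: proj_mx_compl_sub (fullE E x). Qed.

Lemma projE_id {R : realType} {p : nat} (E : 'M[R]_p) u : (u <= E)%MS -> projE E u = u.
Proof. by move=> h; apply: proj_mx_id => //; exact: capE. Qed.

Lemma projE_0 {R : realType} {p : nat} (E : 'M[R]_p) u : (u <= perp E)%MS -> projE E u = 0.
Proof. by move=> h; apply: proj_mx_0 => //; exact: capE. Qed.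

Lemma projED {R : realType} {p : nat} (E : 'M[R]_p) u v : projE E (u + v) = projE E u + projE E v.
Proof. by rewrite /projE mulmxDl. Qed.

Lemma projE_decomp {R : realType} {p : nat} (E : 'M[R]_p) x : x = projE E x + projEperp E x.
Proof. by rewrite /projEperp addrC subrK. Qed.

Lemma subB_sub {R : realType} {m n k : nat} {A B : 'M[R]_(m, n)} {C : 'M[R]_(k, n)} :
  (A <= C)%MS -> (B <= C)%MS -> (A - B <= C)%MS.
Proof. by move=> hA hB; rewrite addmx_sub // eqmx_opp. Qed.

Lemma dotp_split {R : realType} {p : nat} (E : 'M[R]_p) a b a' b' :
  (a <= E)%MS -> (b <= perp E)%MS -> (a' <= E)%MS -> (b' <= perp E)%MS ->
  dotp (a + b) (a' + b') = dotp a a' + dotp b b'.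
Proof.
move=> ha hb ha' hb'.
rewrite dotpDl !dotpDr (@orthE _ _ E a b') // (dotpC b a') (@orthE _ _ E a' b) //.
by rewrite addr0 add0r.
Qed.

Lemma fmap_projE {R : realType} {p : nat} {E : 'M[R]_p} {g : 'rV[R]_p -> 'rV[R]_p} :
  (forall u, (u <= perp E)%MS -> (g u <= perp E)%MS) ->
  forall x, projE E (fmap_perp E g x) = projE E x.
Proof.
move=> hg x; rewrite /fmap_perp projED projE_id ?projE_sub //.
by rewrite [projE E (g _)]projE_0 ?addr0 //; apply: hg; exact: projEperp_sub.
Qed.

Lemma fmap_projEperp {R : realType} {p : nat} {E : 'M[R]_p} {g : 'rV[R]_p -> 'rV[R]_p} :
  (forall u, (u <= perp E)%MS -> (g u <= perp E)%MS) ->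
  forall x, projEperp E (fmap_perp E g x) = g (projEperp E x).
Proof.
move=> hg x; rewrite /projEperp (@fmap_projE _ _ E g hg) /fmap_perp.
by rewrite addrAC subrr add0r.
Qed.

Lemma fmap_dist {R : realType} {p : nat} {E : 'M[R]_p} {g : 'rV[R]_p -> 'rV[R]_p} :
  isometry_on_perp E g -> forall x x',
  dotp (fmap_perp E g x - fmap_perp E g x') (fmap_perp E g x - fmap_perp E g x')
  = dotp (x - x') (x - x').
Proof.
move=> [hg hd] x x'.
have e1 : fmap_perp E g x - fmap_perp E g x' =
   (projE E x - projE E x') + (g (projEperp E x) - g (projEperp E x')).
  by rewrite /fmap_perp opprD addrACA.
have e2 : x - x' = (projE E x - projE E x') + (projEperp E x - projEperp E x').
  by rewrite /projEperp opprB addrACA [projE E x + _]addrC subrK addKr.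
have hs := @subB_sub R 1 p p.
have ha : (projE E x - projE E x' <= E)%MS by rewrite hs ?projE_sub.
have hb : (g (projEperp E x) - g (projEperp E x') <= perp E)%MS
  by rewrite hs ?hg ?projEperp_sub.
have hc : (projEperp E x - projEperp E x' <= perp E)%MS by rewrite hs ?projEperp_sub.
rewrite e1 e2 (dotp_split E _ _ _ _ ha hb ha hb) (dotp_split E _ _ _ _ ha hc ha hc).
by rewrite hd ?projEperp_sub.
Qed.

Lemma fmap_inner {R : realType} {p : nat} {E : 'M[R]_p} {g : 'rV[R]_p -> 'rV[R]_p} :
  orthogonal_linear_on_perp E g -> forall x x',
  dotp (fmap_perp E g x) (fmap_perp E g x') = dotp x x'.
Proof.
move=> [hg [hl hd]] x x'.
rewrite {2}(projE_decomp E x) {2}(projE_decomp E x') /fmap_perp.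
have h1 := projEperp_sub E x; have h2 := projEperp_sub E x'.
rewrite (dotp_split E _ _ _ _ (projE_sub E x) (hg _ h1) (projE_sub E x') (hg _ h2)).
by rewrite (dotp_split E _ _ _ _ (projE_sub E x) h1 (projE_sub E x') h2) hd.
Qed.

Lemma mulmxT_dotp {R : realType} {m k n : nat} (A : 'M[R]_(m, n)) (B : 'M[R]_(k, n)) i j :
  (A *m B^T) i j = dotp (row i A) (row j B).
Proof. by rewrite dotpE mxE; apply: eq_bigr => l _; rewrite !mxE. Qed.

Lemma rank_gram {R : realType} {m n : nat} (A : 'M[R]_(m, n)) :
  (\rank A <= \rank (A *m A^T))%N.
Proof.
have sk : (kermx (A *m A^T) <= kermx A)%MS.
  apply/sub_kermxP; apply/row_matrixP => i; rewrite row_mul row0.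
  apply: dotp_eq0; rewrite /dotp trmx_mul mulmxA -(mulmxA _ A).
  have := row_sub i (kermx (A *m A^T)) => /sub_kermxP ->.
  by rewrite mul0mx mxE.
have := mxrankS sk; rewrite !mxrank_ker.
have := rank_leq_row A; have := rank_leq_row (A *m A^T).
lia.
Qed.

Lemma orth_g0 {R : realType} {p : nat} {E : 'M[R]_p} {g : 'rV[R]_p -> 'rV[R]_p} :
  orthogonal_linear_on_perp E g -> g 0 = 0.
Proof.
move=> [_ [hl _]].
have := hl 1 0 0 (sub0mx _ _) (sub0mx _ _).
rewrite scaler0 addr0 scale1r => H.
by apply/(addrI (g 0)); rewrite addr0 -H.
Qed.

Lemma orth_sum {R : realType} {p : nat} {E : 'M[R]_p} {g : 'rV[R]_p -> 'rV[R]_p} n (c : 'I_n -> R)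
  (v : 'I_n -> 'rV[R]_p) :
  orthogonal_linear_on_perp E g -> (forall i, (v i <= perp E)%MS) ->
  g (\sum_i c i *: v i) = \sum_i c i *: g (v i).
Proof.
move=> hg hv.
have := hg => -[_ [hl _]].
pose K := fun (s t : 'rV[R]_p) => (s <= perp E)%MS /\ g s = t.
suff : K (\sum_i c i *: v i) (\sum_i c i *: g (v i)) by case.
apply: (big_rec2 K); first by split; [exact: sub0mx | exact: orth_g0 hg].
move=> i y1 y2 _ [h1 h2]; split.
  by rewrite addmx_sub // scalemx_sub.
by rewrite hl // h2.
Qed.

Lemma orth_surj {R : realType} {p : nat} {E : 'M[R]_p} {g : 'rV[R]_p -> 'rV[R]_p} :
  orthogonal_linear_on_perp E g ->
  forall w, (w <= perp E)%MS -> exists2 u, (u <= perp E)%MS & g u = w.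
Proof.
move=> hg w hw.
have := hg => -[hs [hl hd]].
set V := perp E.
pose W : 'M[R]_p := \matrix_(i < p) g (row i V).
have hWV : (W <= V)%MS.
  by apply/row_subP => i; rewrite rowK; apply: hs; exact: row_sub.
have gram : W *m W^T = V *m V^T.
  apply/matrixP => i j; rewrite !mulmxT_dotp !rowK hd //; exact: row_sub.
have rk : (\rank V <= \rank W)%N.
  apply: (leq_trans (rank_gram V)); rewrite -gram; exact: mxrankM_maxl.
have hVW : (V <= W)%MS.
  have [_ <-] := mxrank_leqif_sup hWV.
  by rewrite eqn_leq rk mxrankS.
have /submxP[a ->] := submx_trans hw hVW.
exists (a *m V); first exact: submxMl.
rewrite !mulmx_sum_row (@orth_sum _ _ E) //; last by move=> i; exact: row_sub.
by apply: eq_bigr => i _; rewrite rowK.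
Qed.


Lemma expand3 {R : realType} {p : nat} a (X Y Z : 'rV[R]_p) :
  dotp (X - a *: Y - Z) (X - a *: Y - Z) =
  dotp X X + a * a * dotp Y Y + dotp Z Z - 2 * a * dotp X Y - 2 * dotp X Z
  + 2 * a * dotp Y Z.
Proof.
rewrite !dotpBl !dotpBr !dotpZl !dotpZr (dotpC Y X) (dotpC Z X) (dotpC Z Y).
ring.
Qed.

Lemma polar {R : realType} {p : nat} (a b a' b' : 'rV[R]_p) :
  dotp (a - b) (a - b) = dotp (a' - b') (a' - b') ->
  dotp a a = dotp a' a' -> dotp b b = dotp b' b' -> dotp a b = dotp a' b'.
Proof.
move=> e1 e2 e3; move: e1.
rewrite !dotpBl !dotpBr (dotpC b a) (dotpC b' a') e2 e3.
lra.
Qed.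

Lemma iso_orth {R : realType} {p : nat} {E : 'M[R]_p} {g : 'rV[R]_p -> 'rV[R]_p} :
  isometry_on_perp E g -> orthogonal_linear_on_perp E (fun u => g u - g 0).
Proof.
move=> [hs hd].
have h0 : ((0 : 'rV[R]_p) <= perp E)%MS by exact: sub0mx.
set h := fun u => g u - g 0.
have hsub u : (u <= perp E)%MS -> (h u <= perp E)%MS.
  by move=> hu; apply: subB_sub; apply: hs.
have hdiff u v : h u - h v = g u - g v by rewrite /h opprB addrA subrK.
have hnorm u : (u <= perp E)%MS -> dotp (h u) (h u) = dotp u u.
  by move=> hu; rewrite /h hd // subr0.
have pres u v : (u <= perp E)%MS -> (v <= perp E)%MS -> dotp (h u) (h v) = dotp u v.
  move=> hu hv; have e1 := hd u v hu hv; rewrite -hdiff in e1.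
  exact: polar e1 (hnorm u hu) (hnorm v hv).
split; first exact: hsub.
split; last exact: pres.
move=> a u v hu hv.
have hA : ((a *: u + v)%R <= perp E)%MS by rewrite addmx_sub // scalemx_sub.
have : dotp (h (a *: u + v) - a *: h u - h v) (h (a *: u + v) - a *: h u - h v) = 0.
  rewrite expand3 !pres // -expand3.
  by rewrite [a *: u + v]addrC addrK subrr dotp0l.
move/dotp_eq0 => /eqP; rewrite -addrA -opprD subr_eq0 => /eqP.
by [].
Qed.

Lemma inv_exists {R : realType} {p : nat} {E : 'M[R]_p} {g : 'rV[R]_p -> 'rV[R]_p} :
  (forall u, (u <= perp E)%MS -> (g u <= perp E)%MS) ->
  (forall w, (w <= perp E)%MS -> exists2 u, (u <= perp E)%MS & g u = w) ->
  (forall u v, (u <= perp E)%MS -> (v <= perp E)%MS -> g u = g v -> u = v) ->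
  exists gi : 'rV[R]_p -> 'rV[R]_p,
    [/\ (forall w, (w <= perp E)%MS -> (gi w <= perp E)%MS),
        (forall w, (w <= perp E)%MS -> g (gi w) = w) &
        (forall u, (u <= perp E)%MS -> gi (g u) = u)].
Proof.
move=> hs hsurj hinj.
pose gi w := xget 0 [set u | (u <= perp E)%MS /\ g u = w].
have H w : (w <= perp E)%MS -> (gi w <= perp E)%MS /\ g (gi w) = w.
  move=> hw; have [u hu hgu] := hsurj w hw.
  exact: (@xgetPex _ 0 [set u | (u <= perp E)%MS /\ g u = w] (ex_intro _ u (conj hu hgu))).
exists gi; split.
- by move=> w /H [].
- by move=> w /H [].
- move=> u hu; have [h1 h2] := H (g u) (hs u hu).
  exact: hinj.
Qed.

Lemma fmap_comp {R : realType} {p : nat} {E : 'M[R]_p} {g : 'rV[R]_p -> 'rV[R]_p} gi :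
  (forall u, (u <= perp E)%MS -> (g u <= perp E)%MS) ->
  (forall u, (u <= perp E)%MS -> gi (g u) = u) ->
  forall x, fmap_perp E gi (fmap_perp E g x) = x.
Proof.
move=> hs hinv x.
rewrite {1}/fmap_perp (@fmap_projE _ _ E g hs) (@fmap_projEperp _ _ E g hs) hinv ?projEperp_sub //.
by rewrite -projE_decomp.
Qed.

Lemma iso_inverse {R : realType} {p : nat} {E : 'M[R]_p} {g : 'rV[R]_p -> 'rV[R]_p} :
  isometry_on_perp E g -> exists gi, isometry_on_perp E gi /\
    (forall x, fmap_perp E gi (fmap_perp E g x) = x).
Proof.
move=> hg; have := hg => -[hs hd].
have h0 : ((0 : 'rV[R]_p) <= perp E)%MS by exact: sub0mx.
have hinj u v : (u <= perp E)%MS -> (v <= perp E)%MS -> g u = g v -> u = v.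
  move=> hu hv e; apply/eqP; rewrite -subr_eq0; apply/eqP; apply: dotp_eq0.
  by rewrite -hd // e subrr dotp0l.
have hsurj w : (w <= perp E)%MS -> exists2 u, (u <= perp E)%MS & g u = w.
  move=> hw.
  have [u hu e] := orth_surj (iso_orth hg) _ (subB_sub hw (hs 0 h0)).
  exists u => //; move/(congr1 (fun t => t + g 0)): e; by rewrite !subrK.
have [gi [gs ggi gig]] := inv_exists hs hsurj hinj.
exists gi; split; last exact: fmap_comp.
split; first exact: gs.
by move=> u v hu hv; rewrite -(hd (gi u) (gi v)) ?gs // !ggi.
Qed.

Lemma orth_inverse {R : realType} {p : nat} {E : 'M[R]_p} {g : 'rV[R]_p -> 'rV[R]_p} :
  orthogonal_linear_on_perp E g -> exists gi, orthogonal_linear_on_perp E gi /\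
    (forall x, fmap_perp E gi (fmap_perp E g x) = x).
Proof.
move=> hg; have := hg => -[hs [hl hd]].
have hinj u v : (u <= perp E)%MS -> (v <= perp E)%MS -> g u = g v -> u = v.
  move=> hu hv e; apply/eqP; rewrite -subr_eq0; apply/eqP; apply: dotp_eq0.
  have huv : (u - v <= perp E)%MS by exact: subB_sub.
  rewrite -hd //.
  have -> : g (u - v) = 0.
    by rewrite -[u - v]addrC -scaleN1r hl // e scaleN1r addNr.
  by rewrite dotp0l.
have [gi [gs ggi gig]] := inv_exists hs (orth_surj hg) hinj.
exists gi; split; last exact: fmap_comp.
split; first exact: gs.
split.
  move=> a u v hu hv; apply: hinj.
  - by apply: gs; rewrite addmx_sub // scalemx_sub.
  - by rewrite addmx_sub ?scalemx_sub ?gs.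
  by rewrite ggi ?addmx_sub ?scalemx_sub // hl ?gs // !ggi.
by move=> u v hu hv; rewrite -(hd (gi u) (gi v)) ?gs // !ggi.
Qed.

Lemma orth_rep {R : realType} {p : nat} {E : 'M[R]_p} {g : 'rV[R]_p -> 'rV[R]_p} :
  orthogonal_linear_on_perp E g ->
  exists G : 'M[R]_p, forall x, g (projEperp E x) = x *m G.
Proof.
move=> hg.
pose Q : 'M[R]_p := 1%:M - proj_mx E (perp E).
have eQ x : projEperp E x = x *m Q by rewrite /Q mulmxBr mulmx1.
have hQ i : (row i Q <= perp E)%MS.
  by rewrite -[Q]mul1mx row_mul -eQ; exact: projEperp_sub.
exists (\matrix_i g (row i Q)) => x.
rewrite eQ !mulmx_sum_row (@orth_sum _ _ E) //.
by apply: eq_bigr => i _; rewrite rowK.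
Qed.

Lemma fmap_affine_orth {R : realType} {p : nat} {E : 'M[R]_p} {g : 'rV[R]_p -> 'rV[R]_p} :
  orthogonal_linear_on_perp E g ->
  exists M : 'M[R]_p, forall x, fmap_perp E g x = x *m M.
Proof.
move=> hg; have [G hG] := orth_rep hg.
by exists (proj_mx E (perp E) + G) => x; rewrite mulmxDr /fmap_perp hG.
Qed.

Lemma fmap_affine_iso {R : realType} {p : nat} {E : 'M[R]_p} {g : 'rV[R]_p -> 'rV[R]_p} :
  isometry_on_perp E g ->
  exists (M : 'M[R]_p) (c : 'rV[R]_p), forall x, fmap_perp E g x = x *m M + c.
Proof.
move=> hg; have [G hG] := orth_rep (iso_orth hg).
exists (proj_mx E (perp E) + G), (g 0) => x.
by rewrite mulmxDr /fmap_perp -hG /= -addrA subrK.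
Qed.


Lemma mx_cont {R : realType} {T : topologicalType} {m n : nat} (f : T -> 'M[R]_(m, n)) :
  (forall i j, continuous (fun x => f x i j)) -> continuous f.
Proof.
move=> fc x A [P Pn sPA].
have : \forall y \near x, forall i j, P i j (f y i j).
  apply: filter_forall => i; apply: filter_forall => j.
  exact: (fc i j x _ (Pn i j)).
by apply: filterS => y Py; apply: sPA.
Qed.

Lemma sum_cont {R : realType} {T : topologicalType} (I : Type) (s : seq I) (F : I -> T -> R) :
  (forall i, continuous (F i)) -> continuous (fun x => \sum_(i <- s) F i x).
Proof.
move=> Fc; elim: s => [|i s IH].
  by under eq_fun do rewrite big_nil; exact: cst_continuous.
under eq_fun do rewrite big_cons.
by move=> x; apply: continuousD; [exact: Fc | exact: IH].
Qed.

Lemma affine_cont {R : realType} {p : nat} (M : 'M[R]_p) (c : 'rV[R]_p) :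
  continuous (fun x : 'rV[R]_p => x *m M + c).
Proof.
apply: mx_cont => i j.
under eq_fun do rewrite !mxE.
move=> x; apply: continuousD; last exact: cst_continuous.
apply: sum_cont => k y.
apply: continuousM; last exact: cst_continuous.
exact: coord_continuous.
Qed.

Lemma meas_affine {R : realType} {p : nat} (M : 'M[R]_p) (c : 'rV[R]_p) :
  measurable_fun setT (fun x : Rvec R p => x *m M + c : Rvec R p).
Proof.
apply: (@measurability _ _ (Rvec R p) (Rvec R p) setT _ (@open 'rV[R]_p) erefl) => _ [B oB <-].
apply: sub_sigma_algebra; rewrite setTI.
apply: open_comp => //; move=> x _; exact: affine_cont.
Qed.

Lemma coord_meas {R : realType} {p : nat} (k : 'I_p) :
  measurable_fun setT (fun x : Rvec R p => x ord0 k).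
Proof.
have mE := (RGenOpens.measurableE R : (@measurable _ R) = _).
apply: (@measurability _ _ _ _ _ _ (@RGenOpens.G R)).
  exact: mE.
move=> _ [_ [a [b ->]] <-].
apply: sub_sigma_algebra; apply: openI; first exact: openT.
apply: open_comp; last exact: itv_open.
move=> x _; exact: coord_continuous.
Qed.

Lemma dotp_meas d (T : measurableType d) {R : realType} {p : nat} (a b : T -> 'rV[R]_p) :
  (forall k, measurable_fun setT (fun t => a t ord0 k)) ->
  (forall k, measurable_fun setT (fun t => b t ord0 k)) ->
  measurable_fun setT (fun t => dotp (a t) (b t)).
Proof.
move=> ha hb.
have -> : (fun t => dotp (a t) (b t)) = (fun t => \sum_i a t ord0 i * b t ord0 i).
  by apply/funext => t; rewrite dotpE.
by apply: measurable_sum => k; apply: measurable_funM.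
Qed.

Lemma L_dist_meas {R : realType} {p q : nat} :
  measurable_fun setT (fun zz : ((Rvec R p * Rvec R q) * (Rvec R p * Rvec R q))%type =>
      (L_dist zz.1.1 zz.2.1 zz.1.2 zz.2.2)%:E).
Proof.
apply/measurable_EFinP; rewrite /L_dist.
have m11 k : measurable_fun setT (fun zz : ((Rvec R p * Rvec R q) * (Rvec R p * Rvec R q))%type => zz.1.1 ord0 k).
  exact: (measurableT_comp (coord_meas k) (measurableT_comp measurable_fst measurable_fst)).
have m21 k : measurable_fun setT (fun zz : ((Rvec R p * Rvec R q) * (Rvec R p * Rvec R q))%type => zz.2.1 ord0 k).
  exact: (measurableT_comp (coord_meas k) (measurableT_comp measurable_fst measurable_snd)).
have m12 k : measurable_fun setT (fun zz : ((Rvec R p * Rvec R q) * (Rvec R p * Rvec R q))%type => zz.1.2 ord0 k).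
  exact: (measurableT_comp (coord_meas k) (measurableT_comp measurable_snd measurable_fst)).
have m22 k : measurable_fun setT (fun zz : ((Rvec R p * Rvec R q) * (Rvec R p * Rvec R q))%type => zz.2.2 ord0 k).
  exact: (measurableT_comp (coord_meas k) (measurableT_comp measurable_snd measurable_snd)).
apply: measurable_funX; apply: measurable_funB; apply: dotp_meas => k;
  (under eq_fun do rewrite !mxE); apply: measurable_funB => //.
Qed.

Lemma L_inner_meas {R : realType} {p q : nat} :
  measurable_fun setT (fun zz : ((Rvec R p * Rvec R q) * (Rvec R p * Rvec R q))%type =>
      (L_inner zz.1.1 zz.2.1 zz.1.2 zz.2.2)%:E).
Proof.
apply/measurable_EFinP; rewrite /L_inner.
have m11 k : measurable_fun setT (fun zz : ((Rvec R p * Rvec R q) * (Rvec R p * Rvec R q))%type => zz.1.1 ord0 k).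
  exact: (measurableT_comp (coord_meas k) (measurableT_comp measurable_fst measurable_fst)).
have m21 k : measurable_fun setT (fun zz : ((Rvec R p * Rvec R q) * (Rvec R p * Rvec R q))%type => zz.2.1 ord0 k).
  exact: (measurableT_comp (coord_meas k) (measurableT_comp measurable_fst measurable_snd)).
have m12 k : measurable_fun setT (fun zz : ((Rvec R p * Rvec R q) * (Rvec R p * Rvec R q))%type => zz.1.2 ord0 k).
  exact: (measurableT_comp (coord_meas k) (measurableT_comp measurable_snd measurable_fst)).
have m22 k : measurable_fun setT (fun zz : ((Rvec R p * Rvec R q) * (Rvec R p * Rvec R q))%type => zz.2.2 ord0 k).
  exact: (measurableT_comp (coord_meas k) (measurableT_comp measurable_snd measurable_snd)).
by apply: measurable_funX; apply: measurable_funB; apply: dotp_meas.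
Qed.


Lemma meas_lin {R : realType} {p : nat} (M : 'M[R]_p) :
  measurable_fun setT (fun x : Rvec R p => x *m M : Rvec R p).
Proof.
have -> : (fun x : Rvec R p => x *m M : Rvec R p) = (fun x => x *m M + 0).
  by apply/funext => x; rewrite addr0.
exact: meas_affine.
Qed.

Lemma push_comp {R : realType} {T : Type} (m : set T -> \bar R) (f g : T -> T) :
  (forall x, g (f x) = x) -> push (push m f) g = m.
Proof.
move=> h; apply/funext => A; rewrite /push; congr (m _).
by apply/funext => x; rewrite /preimage /= h.
Qed.

Lemma push_id {R : realType} {T : Type} (m : set T -> \bar R) : push m id = m.
Proof. by []. Qed.

Lemma gw_invariance (R : realType) (p q : nat)
  (L : 'rV[R]_p -> 'rV[R]_p -> 'rV[R]_q -> 'rV[R]_q -> R) (E : 'M[R]_p) (F : 'M[R]_q)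
  (gs : probability (Rvec R p * Rvec R q)%type R)
  (m : set (Rvec R p) -> \bar R) (n : set (Rvec R q) -> \bar R)
  (phi phi' : Rvec R p -> Rvec R p) (psi psi' : Rvec R q -> Rvec R q) :
  measurable_fun setT phi -> measurable_fun setT psi ->
  measurable_fun setT phi' -> measurable_fun setT psi' ->
  (forall x, projE E (phi x) = projE E x) -> (forall y, projE F (psi y) = projE F y) ->
  (forall x, projE E (phi' x) = projE E x) -> (forall y, projE F (psi' y) = projE F y) ->
  (forall x x' y y', L (phi x) (phi x') (psi y) (psi y') = L x x' y y') ->
  (forall x x' y y', L (phi' x) (phi' x') (psi' y) (psi' y') = L x x' y y') ->
  (forall x, phi' (phi x) = x) -> (forall y, psi' (psi y) = y) ->
  (forall x x' y y', 0 <= L x x' y y') ->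
  measurable_fun setT (fun zz : ((Rvec R p * Rvec R q) * (Rvec R p * Rvec R q))%type =>
      (L zz.1.1 zz.2.1 zz.1.2 zz.2.2)%:E) ->
  GW_EF L E F gs (push m phi) (push n psi) = GW_EF L E F gs m n.
Proof.
move=> m1 m2 m3 m4 h1 h2 h3 h4 l1 l2 c1 c2 L0 mL.
apply/eqP; rewrite eq_le; apply/andP; split.
  exact: gw_push_le.
rewrite -{1}(@push_comp _ _ m phi phi' c1) -{1}(@push_comp _ _ n psi psi' c2).
exact: gw_push_le.
Qed.

Theorem proposition2 (R : realType) (p q : nat)
    (mu : probability (Rvec R p) R) (nu : probability (Rvec R q) R)
    (E : 'M[R]_p) (F : 'M[R]_q) :
  (* (i) squared-distance loss: invariance under isometries of E^perp / F^perp *)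
  (forall gs : probability (Rvec R p * Rvec R q)%type R,
     gw_optimal (@L_dist R p q) E F mu nu gs ->
     (forall g : 'rV[R]_p -> 'rV[R]_p, isometry_on_perp E g ->
        GW_EF (@L_dist R p q) E F gs
          (push mu (fmap_perp E g : Rvec R p -> Rvec R p)) nu
        = GW_EF (@L_dist R p q) E F gs mu nu) /\
     (forall h : 'rV[R]_q -> 'rV[R]_q, isometry_on_perp F h ->
        GW_EF (@L_dist R p q) E F gs mu
          (push nu (fmap_perp F h : Rvec R q -> Rvec R q))
        = GW_EF (@L_dist R p q) E F gs mu nu)) /\
  (* (ii) inner-product loss: invariance under orthogonal linear maps of E^perp / F^perp *)
  (forall gs : probability (Rvec R p * Rvec R q)%type R,
     gw_optimal (@L_inner R p q) E F mu nu gs ->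
     (forall g : 'rV[R]_p -> 'rV[R]_p, orthogonal_linear_on_perp E g ->
        GW_EF (@L_inner R p q) E F gs
          (push mu (fmap_perp E g : Rvec R p -> Rvec R p)) nu
        = GW_EF (@L_inner R p q) E F gs mu nu) /\
     (forall h : 'rV[R]_q -> 'rV[R]_q, orthogonal_linear_on_perp F h ->
        GW_EF (@L_inner R p q) E F gs mu
          (push nu (fmap_perp F h : Rvec R q -> Rvec R q))
        = GW_EF (@L_inner R p q) E F gs mu nu)).
Proof.
have Ld0 x x' y y' : 0 <= @L_dist R p q x x' y y' by rewrite /L_dist sqr_ge0.
have Li0 x x' y y' : 0 <= @L_inner R p q x x' y y' by rewrite /L_inner sqr_ge0.
have mid k : measurable_fun setT (@id (Rvec R k)) by exact: measurable_id.
split=> gs _; split.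
- move=> g hg.
  have [M [c hM]] := fmap_affine_iso hg.
  have [gi [hgi hcomp]] := iso_inverse hg.
  have [M' [c' hM']] := fmap_affine_iso hgi.
  have := @gw_invariance R p q (@L_dist R p q) E F gs mu nu (fmap_perp E g) (fmap_perp E gi) id id.
  rewrite push_id; apply => //.
  + by rewrite (funext hM); exact: meas_affine.
  + by rewrite (funext hM'); exact: meas_affine.
  + exact: fmap_projE hg.1.
  + exact: fmap_projE hgi.1.
  + by move=> x x' y y'; rewrite /L_dist fmap_dist.
  + by move=> x x' y y'; rewrite /L_dist fmap_dist.
  + exact: L_dist_meas.
- move=> g hg.
  have [M [c hM]] := fmap_affine_iso hg.
  have [gi [hgi hcomp]] := iso_inverse hg.
  have [M' [c' hM']] := fmap_affine_iso hgi.
  have := @gw_invariance R p q (@L_dist R p q) E F gs mu nu id id (fmap_perp F g) (fmap_perp F gi).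
  rewrite push_id; apply => //.
  + by rewrite (funext hM); exact: meas_affine.
  + by rewrite (funext hM'); exact: meas_affine.
  + exact: fmap_projE hg.1.
  + exact: fmap_projE hgi.1.
  + by move=> x x' y y'; rewrite /L_dist fmap_dist.
  + by move=> x x' y y'; rewrite /L_dist fmap_dist.
  + exact: L_dist_meas.
- move=> g hg.
  have [M hM] := fmap_affine_orth hg.
  have [gi [hgi hcomp]] := orth_inverse hg.
  have [M' hM'] := fmap_affine_orth hgi.
  have := @gw_invariance R p q (@L_inner R p q) E F gs mu nu (fmap_perp E g) (fmap_perp E gi) id id.
  rewrite push_id; apply => //.
  + by rewrite (funext hM); exact: meas_lin.
  + by rewrite (funext hM'); exact: meas_lin.
  + exact: fmap_projE hg.1.
  + exact: fmap_projE hgi.1.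
  + by move=> x x' y y'; rewrite /L_inner fmap_inner.
  + by move=> x x' y y'; rewrite /L_inner fmap_inner.
  + exact: L_inner_meas.
- move=> g hg.
  have [M hM] := fmap_affine_orth hg.
  have [gi [hgi hcomp]] := orth_inverse hg.
  have [M' hM'] := fmap_affine_orth hgi.
  have := @gw_invariance R p q (@L_inner R p q) E F gs mu nu id id (fmap_perp F g) (fmap_perp F gi).
  rewrite push_id; apply => //.
  + by rewrite (funext hM); exact: meas_lin.
  + by rewrite (funext hM'); exact: meas_lin.
  + exact: fmap_projE hg.1.
  + exact: fmap_projE hgi.1.
  + by move=> x x' y y'; rewrite /L_inner fmap_inner.
  + by move=> x x' y y'; rewrite /L_inner fmap_inner.
  + exact: L_inner_meas.
Qed.
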